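(* Let $(a_0,\ldots,a_n)$ be a finite sequence of positive integers. For every $\varepsilon>0$ there is $m_0>0$ such that for every integer $m\ge m_0$ and every positive integer $N$, $$|\Phi^-(\beta^N)-\Phi^-(\beta^{N+1})|<\frac{\varepsilon}{2}.$$
   Context: For positive integers $d_0,d_1,\ldots$, $[d_0,d_1,d_2,\ldots]$ denotes the continued fraction $\cfrac{1}{d_0+\cfrac{1}{d_1+\cfrac{1}{d_2+\cdots}}}$, and for $\beta=[d_0,d_1,\ldots]$ we write $\alpha_j(\beta)=[d_j,d_{j+1},\ldots]$. $\Phi(\beta)=\sum_{k\ge 0}\alpha_0(\beta)\cdots\alpha_{k-1}(\beta)\log\frac{1}{\alpha_k(\beta)}$ is the Yoccoz Brjuno function. For integers $m\ge1$, $N\ge1$, $\beta^N$ is the number whose digits (indexed from $0$) are $a_0,\ldots,a_n$ in positions $0,\ldots,n$, $N$ in position $n+m$, and $1$ in all other positions. For such $\beta$ (with $m$ fixed), $\Phi^-(\beta)=\Phi(\beta)-\alpha_0(\beta)\cdots\alpha_{n+m-1}(\beta)\log\frac{1}{\alpha_{n+m}(\beta)}$. *)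

(* Defs.v *)
From Stdlib Require Import Reals Lra Lia Arith.
From Coquelicot Require Import Coquelicot.
Open Scope R_scope.

(* A continued fraction is represented by its digit sequence d : nat -> nat
   (digits indexed from 0). *)

Fixpoint cf_fin (d : nat -> nat) (j k : nat) : R :=
  match k with
  | O => / INR (d j)
  | S k' => / (INR (d j) + cf_fin d (S j) k')
  end.

Definition alpha (d : nat -> nat) (j : nat) : R :=
  real (Lim_seq (fun k => cf_fin d j k)).

Fixpoint prodAlpha (d : nat -> nat) (k : nat) : R :=
  match k with
  | O => 1
  | S k' => prodAlpha d k' * alpha d k'
  end.

Definition Phi (d : nat -> nat) : R :=
  Series (fun k => prodAlpha d k * ln (/ alpha d k)).

Definition PhiMinus (n m : nat) (d : nat -> nat) : R :=
  Phi d - prodAlpha d (n + m) * ln (/ alpha d (n + m)).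

Definition betaN (n : nat) (a : nat -> nat) (m N : nat) : nat -> nat :=
  fun j => if (j <=? n)%nat then a j
           else if (j =? n + m)%nat then N else 1%nat.

(* Main.v *)
Require Import Defs.
From Stdlib Require Import Reals Lra Lia Psatz Arith ZArith.
From Coquelicot Require Import Coquelicot.
Open Scope R_scope.

Definition g := (sqrt 5 - 1) / 2.

Lemma g_facts : 1/2 < g < 1 /\ g * (1 + g) = 1.
Proof.
  unfold g. pose proof (sqrt_sqrt 5) as H. pose proof (sqrt_pos 5).
  assert (Hs: 2 < sqrt 5 < 3) by (split; nra).
  split; [lra| nra].
Qed.

Lemma g_inv : / (1 + g) = g.
Proof. destruct g_facts as [[H1 H2] H3]. field_simplify_eq; [nra| lra]. Qed.

Fixpoint onesF (k : nat) : R :=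
  match k with O => 1 | S k' => / (1 + onesF k') end.

Lemma onesF_pos k : 0 < onesF k.
Proof. induction k; simpl; [lra|]. apply Rinv_0_lt_compat; lra. Qed.

Lemma onesF_close k : Rabs (onesF k - g) <= g ^ k.
Proof.
  destruct g_facts as [[H1 H2] H3].
  induction k; simpl.
  - rewrite Rabs_right; lra.
  - pose proof (onesF_pos k) as Hp.
    assert (E: / (1 + onesF k) - g = g * (g - onesF k) / (1 + onesF k)).
    { field_simplify_eq; [nra | lra]. }
    rewrite E. unfold Rdiv. rewrite !Rabs_mult.
    rewrite (Rabs_right g) by lra.
    rewrite (Rabs_right (/ (1 + onesF k))) by (left; apply Rinv_0_lt_compat; lra).
    rewrite (Rabs_minus_sym g).
    assert (/ (1 + onesF k) <= 1).
    { rewrite <- Rinv_1. apply Rinv_le_contravar; lra. }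
    assert (0 <= Rabs (onesF k - g)) by apply Rabs_pos.
    assert (0 < / (1 + onesF k)) by (apply Rinv_0_lt_compat; lra).
    rewrite Rmult_assoc.
    apply Rmult_le_compat_l; [lra|].
    apply Rle_trans with (Rabs (onesF k - g) * 1); [|lra].
    apply Rmult_le_compat_l; lra.
Qed.

Lemma onesF_lim : is_lim_seq onesF g.
Proof.
  destruct g_facts as [[H1 H2] H3].
  assert (Hg : Rabs g < 1) by (rewrite Rabs_right; lra).
  apply is_lim_seq_le_le with (u := fun k => g - g ^ k) (w := fun k => g + g ^ k).
  - intro k. pose proof (onesF_close k) as H. apply Rabs_le_between' in H. lra.
  - replace (Finite g) with (Finite (g - 0)) by (f_equal; ring).
    apply is_lim_seq_minus'; [apply is_lim_seq_const | apply is_lim_seq_geom; auto].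
  - replace (Finite g) with (Finite (g + 0)) by (f_equal; ring).
    apply is_lim_seq_plus'; [apply is_lim_seq_const | apply is_lim_seq_geom; auto].
Qed.

Lemma cf_ones d j k : (forall i, (j <= i)%nat -> d i = 1%nat) -> cf_fin d j k = onesF k.
Proof.
  revert j; induction k; intros j H; simpl.
  - rewrite (H j) by lia. simpl. apply Rinv_1.
  - rewrite (H j) by lia. rewrite IHk by (intros; apply H; lia). simpl. reflexivity.
Qed.

Lemma lim_step d j (L : R) : is_lim_seq (cf_fin d (S j)) L -> INR (d j) + L <> 0 ->
  is_lim_seq (cf_fin d j) (/ (INR (d j) + L)).
Proof.
  intros H Hn. apply is_lim_seq_incr_1. simpl.
  apply (is_lim_seq_inv (fun n => INR (d j) + cf_fin d (S j) n) (INR (d j) + L)).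
  - apply is_lim_seq_plus'; [apply is_lim_seq_const | exact H].
  - intro E. injection E. auto.
Qed.

Section Alpha.
Variable d : nat -> nat.
Variable p : nat.
Hypothesis Hd : forall j, (1 <= d j)%nat.
Hypothesis H1 : forall j, (p < j)%nat -> d j = 1%nat.

Lemma INR_d_ge1 j : 1 <= INR (d j).
Proof. apply (le_INR 1). apply Hd. Qed.

Lemma lim_exists : forall j, exists L, 0 < L /\ is_lim_seq (cf_fin d j) L.
Proof.
  assert (Hr : forall r j, (j + r = S p)%nat -> exists L, 0 < L /\ is_lim_seq (cf_fin d j) L).
  { induction r; intros j Hj.
    - exists g. split; [destruct g_facts; lra|].
      apply is_lim_seq_ext with (u := onesF); [|apply onesF_lim].
      intro k. symmetry. apply cf_ones. intros; apply H1; lia.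
    - destruct (IHr (S j)) as [L [HL HlL]]; [lia|].
      pose proof (INR_d_ge1 j).
      exists (/ (INR (d j) + L)). split; [apply Rinv_0_lt_compat; lra|].
      apply lim_step; auto; lra. }
  intro j. destruct (le_lt_dec j p).
  - apply (Hr (S p - j)%nat). lia.
  - exists g. split; [destruct g_facts; lra|].
    apply is_lim_seq_ext with (u := onesF); [|apply onesF_lim].
    intro k. symmetry. apply cf_ones. intros; apply H1; lia.
Qed.

Lemma alpha_of_lim j (L : R) : is_lim_seq (cf_fin d j) L -> alpha d j = L.
Proof. intro H. unfold alpha. rewrite (is_lim_seq_unique (fun k => cf_fin d j k) L H). reflexivity. Qed.

Lemma alpha_rec j : alpha d j = / (INR (d j) + alpha d (S j)).
Proof.
  destruct (lim_exists (S j)) as [L [HL HlL]].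
  pose proof (INR_d_ge1 j).
  rewrite (alpha_of_lim (S j) L HlL).
  apply alpha_of_lim. apply lim_step; auto; lra.
Qed.

Lemma alpha_pos j : 0 < alpha d j.
Proof. destruct (lim_exists j) as [L [HL HlL]]. rewrite (alpha_of_lim j L HlL). auto. Qed.

Lemma alpha_lt1 j : alpha d j < 1.
Proof.
  rewrite alpha_rec. pose proof (INR_d_ge1 j). pose proof (alpha_pos (S j)).
  rewrite <- Rinv_1. apply Rinv_lt_contravar; lra.
Qed.

Lemma alpha_tail j : (p < j)%nat -> alpha d j = g.
Proof.
  intro Hj. apply alpha_of_lim.
  apply is_lim_seq_ext with (u := onesF); [|apply onesF_lim].
  intro k. symmetry. apply cf_ones. intros; apply H1; lia.
Qed.

End Alpha.

Definition K := ln (/ g) / (1 - g).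

Fixpoint W (al : nat -> R) (r j : nat) : R :=
  match r with O => K * al j | S r' => ln (/ al j) + al j * W al r' (S j) end.
Fixpoint Pr (al : nat -> R) (k : nat) : R :=
  match k with O => 1 | S k' => Pr al k' * al k' end.
Fixpoint sumlt (f : nat -> R) (p : nat) : R :=
  match p with O => 0 | S p' => sumlt f p' + f p' end.

Lemma W_sum al r : forall j,
  sumlt (fun k => Pr al k * ln (/ al k)) (j + r)%nat + Pr al (j + r)%nat * al (j + r)%nat * K
  = sumlt (fun k => Pr al k * ln (/ al k)) j + Pr al j * W al r j.
Proof.
  induction r; intro j.
  - rewrite Nat.add_0_r. simpl. ring.
  - rewrite <- Nat.add_succ_comm. rewrite IHr. simpl. ring.
Qed.

Lemma sum_f_sumlt f p : sum_f_R0 f p = sumlt f (S p).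
Proof. induction p; simpl; [ring|]. rewrite IHp. simpl. ring. Qed.

Lemma prodAlpha_Pr d k : prodAlpha d k = Pr (alpha d) k.
Proof. induction k; simpl; auto. rewrite IHk; auto. Qed.

Lemma Phi_W d p (Hd : forall j, (1 <= d j)%nat) (H1 : forall j, (p < j)%nat -> d j = 1%nat) :
  Phi d - prodAlpha d p * ln (/ alpha d p) = W (alpha d) p 0.
Proof.
  destruct g_facts as [[Hg1 Hg2] Hg3].
  assert (Hg : Rabs g < 1) by (rewrite Rabs_right; lra).
  set (t := fun k => prodAlpha d k * ln (/ alpha d k)).
  assert (Htail : forall k, t (S p + k)%nat = (prodAlpha d (S p) * ln (/ g)) * g ^ k).
  { intro k. unfold t. rewrite (alpha_tail d p H1) by lia.
    assert (prodAlpha d (S p + k) = prodAlpha d (S p) * g ^ k).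
    { induction k. rewrite Nat.add_0_r. simpl. ring.
      rewrite Nat.add_succ_r.
      change (prodAlpha d (S (S p + k))) with (prodAlpha d (S p + k) * alpha d (S p + k)).
      rewrite IHk.
      rewrite (alpha_tail d p H1) by lia. simpl. ring. }
    rewrite H. ring. }
  assert (Hex : ex_series t).
  { apply (ex_series_incr_n t (S p)).
    apply ex_series_ext with (a := fun k => (prodAlpha d (S p) * ln (/ g)) * g ^ k).
    { intro k. rewrite Htail. reflexivity. }
    apply (ex_series_scal_l (prodAlpha d (S p) * ln (/ g)) (fun k => g ^ k)).
    apply ex_series_geom; auto. }
  unfold Phi. fold t.
  rewrite (Series_incr_n t (S p)) by (lia || auto).
  rewrite (Series_ext _ (fun k => (prodAlpha d (S p) * ln (/ g)) * g ^ k)) by (intro; apply Htail).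
  rewrite Series_scal_l, Series_geom by auto.
  simpl Init.Nat.pred. rewrite sum_f_sumlt. simpl sumlt.
  pose proof (W_sum (alpha d) p 0) as HW. simpl in HW.
  rewrite Rmult_1_l, Rplus_0_l in HW. rewrite <- HW.
  unfold t. rewrite !prodAlpha_Pr. 
  assert (E: sumlt (fun k => prodAlpha d k * ln (/ alpha d k)) p =
             sumlt (fun k => Pr (alpha d) k * ln (/ alpha d k)) p).
  { clear. induction p; simpl; auto. rewrite IHp, prodAlpha_Pr. auto. }
  rewrite E. simpl Pr. unfold K, Rdiv. ring.
Qed.

Lemma K_nonneg : 0 <= K.
Proof.
  destruct g_facts as [[Hg1 Hg2] Hg3]. unfold K.
  assert (0 < ln (/ g)).
  { rewrite <- ln_1. apply ln_increasing; [lra|]. rewrite <- Rinv_1. apply Rinv_lt_contravar; lra. }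
  assert (0 < / (1 - g)) by (apply Rinv_0_lt_compat; lra).
  unfold Rdiv. nra.
Qed.

Lemma ln_lip x y c : 0 < c -> c <= x -> c <= y -> Rabs (ln (/ x) - ln (/ y)) <= Rabs (x - y) / c.
Proof.
  intros Hc Hx Hy.
  assert (Hgen : forall u v, c <= u -> c <= v -> v <= u -> ln u - ln v <= (u - v) / c).
  { intros u v Hu Hv Huv.
    assert (ln u - ln v = ln (u / v)).
    { rewrite ln_div; lra. }
    rewrite H.
    assert (Hle : ln (u / v) <= u / v - 1).
    { set (z := ln (u / v)).
      assert (exp z = u / v) by (apply exp_ln; apply Rdiv_lt_0_compat; lra).
      destruct (Req_dec z 0) as [Z|Z]; [rewrite Z in *; rewrite exp_0 in H0; lra|].
      pose proof (exp_ineq1 z Z). lra. }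
    assert (u / v - 1 = (u - v) / v) by (field; lra).
    assert ((u - v) / v <= (u - v) / c).
    { unfold Rdiv. apply Rmult_le_compat_l; [lra|]. apply Rinv_le_contravar; lra. }
    lra. }
  rewrite !ln_Rinv by lra.
  destruct (Rle_dec y x).
  - assert (ln y <= ln x) by (destruct (Req_dec x y); [subst; lra| left; apply ln_increasing; lra]).
    rewrite Rabs_left1 by lra. rewrite Rabs_right by lra. specialize (Hgen x y Hx Hy r). lra.
  - assert (ln x <= ln y) by (left; apply ln_increasing; lra).
    rewrite Rabs_right by lra. rewrite Rabs_left1 by lra. specialize (Hgen y x Hy Hx ltac:(lra)).
    unfold Rdiv in *. lra.
Qed.

Section Pert.
Variable D : nat -> R.
Variable A : R.
Variable p : nat.
Hypothesis HD : forall j, (j < p)%nat -> 1 <= D j <= A.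
Hypothesis HA : 1 <= A.

Definition good (x : nat -> R) :=
  (forall j, (j < p)%nat -> x j = / (D j + x (S j))) /\ 0 < x p < 1.

Lemma good_range x : good x -> forall j, (j <= p)%nat -> 0 < x j < 1.
Proof.
  intros [Hr Hp].
  assert (forall r j, (j + r = p)%nat -> 0 < x j < 1).
  { induction r; intros j Hj.
    - replace j with p by lia. auto.
    - destruct (IHr (S j)) as [H1 H2]; [lia|]. rewrite Hr by lia.
      destruct (HD j) as [H3 H4]; [lia|].
      split; [apply Rinv_0_lt_compat; lra|].
      rewrite <- Rinv_1. apply Rinv_lt_contravar; lra. }
  intros j Hj. apply (H (p - j)%nat). lia.
Qed.

Lemma good_low x : good x -> forall j, (j < p)%nat -> / (A + 1) <= x j.
Proof.
  intros Hg j Hj. pose proof (good_range x Hg (S j) Hj). destruct Hg as [Hr _].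
  rewrite Hr by auto. destruct (HD j Hj).
  apply Rinv_le_contravar; lra.
Qed.

Lemma good_pair x : good x -> forall j, (j < p)%nat -> x j * x (S j) <= 1/2.
Proof.
  intros Hg j Hj. pose proof (good_range x Hg (S j) Hj) as [H1 H2].
  destruct Hg as [Hr _]. rewrite Hr by auto. destruct (HD j Hj).
  assert (/ (D j + x (S j)) <= / (1 + x (S j))) by (apply Rinv_le_contravar; lra).
  assert (/ (1 + x (S j)) * x (S j) <= 1/2).
  { apply Rmult_le_reg_l with (1 + x (S j)); [lra|].
    rewrite <- Rmult_assoc, Rinv_r by lra. lra. }
  nra.
Qed.

Lemma Pr_pos x : good x -> forall k, (k <= p)%nat -> 0 < Pr x k.
Proof.
  intros Hg k. induction k; intro Hk; simpl; [lra|].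
  pose proof (good_range x Hg k ltac:(lia)). pose proof (IHk ltac:(lia)). nra.
Qed.

Definition L := ln (A + 1).
Definition Bd := 4 * L + K.

Lemma ln_inv_bounds x : good x -> forall j, (j < p)%nat -> 0 <= ln (/ x j) <= L.
Proof.
  intros Hg j Hj. pose proof (good_range x Hg j ltac:(lia)) as [H1 H2].
  pose proof (good_low x Hg j Hj). destruct (HD j Hj).
  split.
  - rewrite <- ln_1. left. apply ln_increasing; [lra|]. rewrite <- Rinv_1. apply Rinv_lt_contravar; lra.
  - unfold L. destruct (Req_dec (/ x j) (A + 1)) as [E|E]; [rewrite E; lra|]. left. apply ln_increasing.
    + apply Rinv_0_lt_compat; lra.
    + assert (/ x j <= / / (A + 1)) by (apply Rinv_le_contravar; [apply Rinv_0_lt_compat; lra| lra]).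
      assert (/ / (A + 1) = A + 1) by (field; lra). lra.
Qed.

Lemma W_bound x : good x -> forall r j, (j + r = p)%nat -> 0 <= W x r j <= Bd.
Proof.
  intros Hg.
  pose proof K_nonneg.
  assert (HL : 0 <= L) by (unfold L; rewrite <- ln_1; left; apply ln_increasing; lra).
  assert (forall r, (forall j, (j + r = p)%nat -> 0 <= W x r j <= Bd) /\
                    (forall j, (j + S r = p)%nat -> 0 <= W x (S r) j <= Bd)).
  { induction r.
    - split; intros j Hj; simpl.
      + replace j with p by lia. pose proof (good_range x Hg p (le_n _)). unfold Bd.
        assert (0 <= K * x p <= K * 1) by (split; [apply Rmult_le_pos|apply Rmult_le_compat_l]; lra). lra.
      + pose proof (good_range x Hg (S j) ltac:(lia)). pose proof (good_range x Hg j ltac:(lia)).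
        pose proof (ln_inv_bounds x Hg j ltac:(lia)). unfold Bd.
        assert (0 <= K * x (S j) <= K * 1) by (split; [apply Rmult_le_pos|apply Rmult_le_compat_l]; lra).
        assert (0 <= x j * (K * x (S j)) <= 1 * K) by (split; [apply Rmult_le_pos|apply Rmult_le_compat]; lra).
        lra.
    - destruct IHr as [IH1 IH2]. split; [exact IH2|].
      intros j Hj. simpl. simpl in IH2.
      pose proof (IH1 (S (S j)) ltac:(lia)).
      pose proof (good_range x Hg (S j) ltac:(lia)). pose proof (good_range x Hg j ltac:(lia)).
      pose proof (ln_inv_bounds x Hg j ltac:(lia)). pose proof (ln_inv_bounds x Hg (S j) ltac:(lia)).
      pose proof (good_pair x Hg j ltac:(lia)).
      set (w := W x r (S (S j))) in *.
      set (a0 := x j) in *. set (a1 := x (S j)) in *.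
      assert (0 <= a0 * (a1 * w) <= 1/2 * Bd).
      { split. apply Rmult_le_pos; [lra|]. apply Rmult_le_pos; lra.
        rewrite <- Rmult_assoc. apply Rmult_le_compat; try lra. apply Rmult_le_pos; lra. }
      assert (0 <= a0 * ln (/ a1) <= L) by (split; nra).
      unfold Bd in *. nra. }
  intros r j Hj. apply (proj1 (H0 r)). auto.
Qed.

Variables al be : nat -> R.
Hypothesis Hal : good al.
Hypothesis Hbe : good be.

Lemma e_bound : forall r j, (j + r = p)%nat -> Pr al j * Rabs (al j - be j) <= Pr al p.
Proof.
  induction r; intros j Hj.
  - replace j with p by lia. pose proof (Pr_pos al Hal p (le_n _)).
    pose proof (good_range al Hal p (le_n _)). pose proof (good_range be Hbe p (le_n _)).
    assert (Rabs (al p - be p) <= 1) by (apply Rabs_le; lra).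
    assert (Pr al p * Rabs (al p - be p) <= Pr al p * 1) by (apply Rmult_le_compat_l; lra). lra.
  - pose proof (IHr (S j) ltac:(lia)) as IH. simpl in IH.
    pose proof (good_range al Hal (S j) ltac:(lia)). pose proof (good_range be Hbe (S j) ltac:(lia)).
    pose proof (good_range al Hal j ltac:(lia)). pose proof (good_range be Hbe j ltac:(lia)).
    pose proof (Pr_pos al Hal j ltac:(lia)).
    destruct (HD j ltac:(lia)).
    assert (E : al j - be j = (be (S j) - al (S j)) * al j * be j).
    { destruct Hal as [Ha _]. destruct Hbe as [Hb _]. rewrite (Ha j), (Hb j) by lia. field. lra. }
    rewrite E. rewrite !Rabs_mult. rewrite (Rabs_right (al j)) by lra. rewrite (Rabs_right (be j)) by lra.
    rewrite Rabs_minus_sym.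
    assert (0 <= Rabs (al (S j) - be (S j))) by apply Rabs_pos.
    assert (Pr al j * (Rabs (al (S j) - be (S j)) * al j * be j) <= Pr al j * al j * Rabs (al (S j) - be (S j))).
    { replace (Pr al j * (Rabs (al (S j) - be (S j)) * al j * be j)) with
        ((Pr al j * al j * Rabs (al (S j) - be (S j))) * be j) by ring.
      assert (0 <= Pr al j * al j * Rabs (al (S j) - be (S j))).
      { apply Rmult_le_pos; [|lra]. apply Rmult_le_pos; lra. }
      nra. }
    lra.
Qed.

Lemma pert : forall r j, (j + r = p)%nat ->
  Pr al j * Rabs (W al r j - W be r j) <= (INR r * (A + 1 + Bd) + K) * Pr al p.
Proof.
  pose proof K_nonneg as HK.
  induction r; intros j Hj.
  - replace j with p by lia. simpl. pose proof (e_bound 0 p ltac:(lia)).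
    replace (K * al p - K * be p) with (K * (al p - be p)) by ring.
    rewrite Rabs_mult, (Rabs_right K) by lra.
    pose proof (Pr_pos al Hal p (le_n _)).
    replace ((0 * (A + 1 + Bd) + K) * Pr al p) with (K * Pr al p) by ring.
    replace (Pr al p * (K * Rabs (al p - be p))) with (K * (Pr al p * Rabs (al p - be p))) by ring.
    apply Rmult_le_compat_l; lra.
  - pose proof (IHr (S j) ltac:(lia)) as IH. simpl in IH. simpl W.
    pose proof (e_bound (S r) j Hj) as He.
    pose proof (W_bound be Hbe r (S j) ltac:(lia)) as HWb.
    pose proof (good_range al Hal j ltac:(lia)). pose proof (good_range be Hbe j ltac:(lia)).
    pose proof (good_low al Hal j ltac:(lia)). pose proof (good_low be Hbe j ltac:(lia)).
    pose proof (Pr_pos al Hal j ltac:(lia)).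
    assert (HAp : 0 < / (A + 1)) by (apply Rinv_0_lt_compat; lra).
    pose proof (ln_lip (al j) (be j) (/ (A + 1)) HAp ltac:(lra) ltac:(lra)) as Hln.
    replace (Rabs (al j - be j) / / (A + 1)) with (Rabs (al j - be j) * (A + 1)) in Hln by (field; lra).
    set (Wa := W al r (S j)) in *. set (Wb := W be r (S j)) in *.
    set (lg := ln (/ al j) - ln (/ be j)) in *.
    replace (ln (/ al j) + al j * Wa - (ln (/ be j) + be j * Wb)) with
      (lg + al j * (Wa - Wb) + (al j - be j) * Wb) by (unfold lg; ring).
    set (e := Rabs (al j - be j)) in *.
    assert (T1 : Pr al j * Rabs lg <= (A + 1) * Pr al p).
    { apply Rle_trans with (Pr al j * (e * (A + 1))); [apply Rmult_le_compat_l; lra|].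
      replace (Pr al j * (e * (A + 1))) with ((A + 1) * (Pr al j * e)) by ring.
      apply Rmult_le_compat_l; lra. }
    assert (T2 : Pr al j * Rabs (al j * (Wa - Wb)) = Pr al j * al j * Rabs (Wa - Wb)).
    { rewrite Rabs_mult, Rabs_right by lra. ring. }
    assert (T3 : Pr al j * Rabs ((al j - be j) * Wb) <= Bd * Pr al p).
    { rewrite Rabs_mult, (Rabs_right Wb) by lra. fold e.
      replace (Pr al j * (e * Wb)) with ((Pr al j * e) * Wb) by ring.
      assert (0 <= Pr al j * e) by (apply Rmult_le_pos; [lra| apply Rabs_pos]).
      pose proof (Pr_pos al Hal p (le_n _)).
      apply Rle_trans with (Pr al p * Wb). apply Rmult_le_compat_r; lra.
      rewrite Rmult_comm. apply Rmult_le_compat_r; lra. }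
    pose proof (Rabs_triang (lg + al j * (Wa - Wb)) ((al j - be j) * Wb)).
    pose proof (Rabs_triang lg (al j * (Wa - Wb))).
    assert (Pr al j * Rabs (lg + al j * (Wa - Wb) + (al j - be j) * Wb) <=
            Pr al j * Rabs lg + Pr al j * Rabs (al j * (Wa - Wb)) + Pr al j * Rabs ((al j - be j) * Wb)).
    { rewrite <- !Rmult_plus_distr_l. apply Rmult_le_compat_l; lra. }
    rewrite S_INR. lra.
Qed.

Lemma Pr_mono : forall k, (k <= p)%nat -> Pr al p <= Pr al k.
Proof.
  assert (forall r k, (k + r = p)%nat -> Pr al p <= Pr al k).
  { induction r; intros k Hk. replace k with p by lia; lra.
    pose proof (IHr (S k) ltac:(lia)). simpl in H.
    pose proof (Pr_pos al Hal k ltac:(lia)). pose proof (good_range al Hal k ltac:(lia)).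
    assert (Pr al k * al k <= Pr al k * 1) by (apply Rmult_le_compat_l; lra). lra. }
  intros k Hk. apply (H (p - k)%nat). lia.
Qed.

Lemma Pr_half : forall q, (2 * q <= p)%nat -> Pr al (2 * q) <= (1/2) ^ q.
Proof.
  induction q; intro Hq; [simpl; lra|].
  replace (2 * S q)%nat with (S (S (2 * q))) by lia.
  change (Pr al (S (S (2 * q)))) with (Pr al (2 * q) * al (2 * q) * al (S (2 * q))).
  change ((1/2) ^ S q) with (1/2 * (1/2) ^ q).
  pose proof (IHq ltac:(lia)). pose proof (good_pair al Hal (2 * q) ltac:(lia)).
  pose proof (good_range al Hal (2 * q) ltac:(lia)). pose proof (good_range al Hal (S (2 * q)) ltac:(lia)).
  pose proof (Pr_pos al Hal (2 * q) ltac:(lia)).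
  replace (Pr al (2 * q) * al (2 * q) * al (S (2 * q))) with (Pr al (2 * q) * (al (2 * q) * al (S (2 * q)))) by ring.
  rewrite Rmult_comm. apply Rmult_le_compat; try lra. apply Rmult_le_pos; lra.
Qed.

End Pert.

Lemma nat_unbounded r : exists M : nat, r < INR M.
Proof.
  destruct (archimed r) as [H1 H2].
  destruct (Z_le_gt_dec 0 (up r)) as [Hz|Hz].
  - exists (Z.to_nat (up r)). rewrite INR_IZR_INZ, Z2Nat.id by lia. lra.
  - exists 0%nat. simpl. assert (IZR (up r) < 0) by (apply IZR_lt; lia). lra.
Qed.

Lemma sq_pow q : ((q + 1) * (q + 1) <= 4 * 2 ^ q)%nat.
Proof.
  induction q; [simpl; lia|].
  destruct q; [simpl; lia|]. destruct q; [simpl; lia|].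
  rewrite Nat.pow_succ_r'. nia.
Qed.

Lemma sq_pow_R q : (INR q + 1) * (1/2) ^ q <= 4 / (INR q + 1).
Proof.
  pose proof (sq_pow q) as H. apply le_INR in H.
  rewrite !mult_INR, plus_INR, pow_INR in H. simpl INR in H.
  replace (1 + 1) with 2 in H by ring.
  assert (Hp : 0 < 2 ^ q) by (apply pow_lt; lra).
  replace (1 / 2) with (/ 2) by field.
  rewrite <- (Rinv_pow 2) by lra.
  pose proof (pos_INR q).
  apply Rmult_le_reg_r with (2 ^ q * (INR q + 1)). nra.
  field_simplify; [|lra|lra]. nra.
Qed.

Lemma A_exists (a : nat -> nat) n : exists A : nat, (1 <= A)%nat /\ forall i, (i <= n)%nat -> (a i <= A)%nat.
Proof.
  induction n.
  - exists (Nat.max 1 (a 0%nat)). split; [lia|]. intros i Hi. replace i with 0%nat by lia. lia.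
  - destruct IHn as [A [HA Hi]]. exists (Nat.max A (a (S n))). split; [lia|].
    intros i Hi'. destruct (Nat.eq_dec i (S n)); [subst; lia|]. specialize (Hi i ltac:(lia)). lia.
Qed.

Section Main.
Variables (n : nat) (a : nat -> nat).
Hypothesis ha : forall i : nat, (i <= n)%nat -> (0 < a i)%nat.

Lemma bN_ge1 m N : (1 <= N)%nat -> forall j, (1 <= betaN n a m N j)%nat.
Proof.
  intros HN j. unfold betaN. destruct (j <=? n)%nat eqn:E.
  - apply Nat.leb_le in E. specialize (ha j E). lia.
  - destruct (j =? n + m)%nat; lia.
Qed.

Lemma bN_tail m N : forall j, (n + m < j)%nat -> betaN n a m N j = 1%nat.
Proof.
  intros j Hj. unfold betaN. destruct (j <=? n)%nat eqn:E.
  - apply Nat.leb_le in E. lia.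
  - destruct (j =? n + m)%nat eqn:E2; [apply Nat.eqb_eq in E2; lia| auto].
Qed.

Lemma bN_same m N N' : forall j, (j < n + m)%nat -> betaN n a m N j = betaN n a m N' j.
Proof.
  intros j Hj. unfold betaN. destruct (j <=? n)%nat; auto.
  destruct (j =? n + m)%nat eqn:E2; [apply Nat.eqb_eq in E2; lia| auto].
Qed.

Lemma bN_good m N (Am : nat) : (1 <= N)%nat ->
  good (fun j => INR (betaN n a m 1 j)) (n + m) (alpha (betaN n a m N)).
Proof.
  intros HN. pose proof (bN_ge1 m N HN) as Hd. pose proof (bN_tail m N) as Ht.
  split.
  - intros j Hj. rewrite (alpha_rec _ _ Hd Ht j). rewrite (bN_same m N 1 j Hj). reflexivity.
  - split; [apply (alpha_pos _ _ Hd Ht) | apply (alpha_lt1 _ _ Hd Ht)].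
Qed.

End Main.

Theorem mainTheorem7 (n : nat) (a : nat -> nat)
  (ha : forall i : nat, (i <= n)%nat -> (0 < a i)%nat) :
  forall eps : R, 0 < eps ->
  exists m0 : nat, (0 < m0)%nat /\
    forall m N : nat, (m0 <= m)%nat -> (1 <= N)%nat ->
      Rabs (PhiMinus n m (betaN n a m N) - PhiMinus n m (betaN n a m (S N)))
        < eps / 2.
Proof.
  intros eps Heps.
  destruct (A_exists a n) as [An [HAn HAi]].
  set (A := INR An).
  assert (HA : 1 <= A) by (unfold A; apply (le_INR 1); auto).
  set (C := A + 1 + Bd A).
  pose proof K_nonneg as HK.
  assert (HL : 0 <= L A) by (unfold L; rewrite <- ln_1; left; apply ln_increasing; lra).
  assert (HC : 0 <= C) by (unfold C, Bd; lra).
  destruct (nat_unbounded (8 * (2 * C + K) / eps)) as [M HM].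
  exists (2 * M + 2)%nat. split; [lia|].
  intros m N Hm HN.
  set (p := (n + m)%nat).
  set (D := fun j => INR (betaN n a m 1 j)).
  assert (HD : forall j, (j < p)%nat -> 1 <= D j <= A).
  { intros j Hj. unfold D, A. split.
    - apply (le_INR 1). apply (bN_ge1 n a ha m 1); lia.
    - apply le_INR. unfold betaN. destruct (j <=? n)%nat eqn:E.
      + apply Nat.leb_le in E. auto.
      + destruct (j =? n + m)%nat eqn:E2; [apply Nat.eqb_eq in E2; unfold p in Hj; lia| auto]. }
  pose proof (bN_good n a ha m N 0 HN) as G1.
  pose proof (bN_good n a ha m (S N) 0 ltac:(lia)) as G2.
  unfold PhiMinus.
  rewrite (Phi_W _ _ (bN_ge1 n a ha m N HN) (bN_tail n a m N)).
  rewrite (Phi_W _ _ (bN_ge1 n a ha m (S N) ltac:(lia)) (bN_tail n a m (S N))).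
  fold p in G1, G2.
  pose proof (pert D A p HD HA _ _ G1 G2 p 0 ltac:(lia)) as HP.
  simpl Pr in HP. rewrite Rmult_1_l in HP.
  set (q := (p / 2)%nat).
  assert (Hq1 : (2 * q <= p)%nat) by (unfold q; apply Nat.mul_div_le; lia).
  assert (Hq2 : (p < 2 * q + 2)%nat) by (unfold q; pose proof (Nat.mod_upper_bound p 2); pose proof (Nat.div_mod p 2); lia).
  assert (HqM : (M + 1 <= q)%nat) by (unfold p in *; lia).
  pose proof (Pr_mono D A p HD _ G1 (2 * q) Hq1) as Hm1.
  pose proof (Pr_half D A p HD _ G1 q Hq1) as Hm2.
  pose proof (Pr_pos D A p HD _ G1 p (le_n _)) as Hpp.
  fold C in HP.
  assert (Hp : INR p <= 2 * (INR q + 1)).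
  { assert (INR p <= INR (2 * q + 1)) by (apply le_INR; lia).
    rewrite plus_INR, mult_INR in H. simpl in H. lra. }
  pose proof (sq_pow_R q) as Hsq.
  pose proof (pos_INR q).
  assert (Hh : 0 < (1/2) ^ q) by (apply pow_lt; lra).
  assert (HMq : INR M + 1 <= INR q) by (rewrite <- S_INR; apply le_INR; lia).
  assert (Hb1 : (INR p * C + K) * Pr (alpha (betaN n a m N)) p <= (2 * C + K) * ((INR q + 1) * (1/2) ^ q)).
  { apply Rle_trans with ((INR p * C + K) * (1/2) ^ q).
    - apply Rmult_le_compat_l; [pose proof (pos_INR p); nra| lra].
    - assert (INR p * C + K <= (2 * C + K) * (INR q + 1)) by nra. nra. }
  assert (Hb2 : (2 * C + K) * ((INR q + 1) * (1/2) ^ q) <= (2 * C + K) * (4 / (INR q + 1))).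
  { apply Rmult_le_compat_l; lra. }
  assert (Hb3 : (2 * C + K) * (4 / (INR q + 1)) < eps / 2).
  { assert (8 * (2 * C + K) < eps * (INR q + 1)).
    { assert (E : 8 * (2 * C + K) = (8 * (2 * C + K) / eps) * eps) by (field; lra).
      rewrite E. set (z := 8 * (2 * C + K) / eps) in *.
      assert (z * eps < INR M * eps) by (apply Rmult_lt_compat_r; lra).
      assert (INR M * eps <= INR q * eps) by (apply Rmult_le_compat_r; lra).
      lra. }
    apply Rmult_lt_reg_r with (2 * (INR q + 1)); [lra|].
    field_simplify; [|lra]. lra. }
  assert (Hfin : Rabs (W (alpha (betaN n a m N)) p 0 - W (alpha (betaN n a m (S N))) p 0) <=
                 (INR p * C + K) * Pr (alpha (betaN n a m N)) p).
  { exact HP. }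
  fold p. lra.
Qed.
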